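(* Let $\Sigma$ be a finite alphabet and $L\subseteq\Sigma^{++}$ a local language. Then $L$ is regional if and only if there exist $n\ge 1$ and simple regional tile sets $\theta_1,\dots,\theta_n$ over $\Sigma\cup\{\#\}$ such that $L=\bigcup_{1\le i\le n}LOC(\theta_i)$.
   Context: A picture over $\Sigma$ is a nonempty rectangular array of symbols of $\Sigma$, $\Sigma^{++}$ the set of all of them; $p(i,j)$ is the pixel in row $i$, column $j$; for $\#\notin\Sigma$, $\hat p$ is $p$ surrounded by a one-pixel frame of $\#$'s. A tile is a $2\times 2$ picture; $\llbracket q\rrbracket$ is the set of all $2\times2$ subpictures (on consecutive rows and columns) of $q$. For a finite set $\theta$ of tiles over $\Sigma\cup\{\#\}$, $LOC(\theta)=\{p\in\Sigma^{++}:\llbracket\hat p\rrbracket\subseteq\theta\}$; $L$ is local if $L=LOC(\theta)$ for some such $\theta$. A subdomain of $p$ is a rectangle $\{x,\dots,x'\}\times\{y,\dots,y'\}$ of positions; it is $C$-homogeneous (label $C$) if all its pixels equal $C$. A homogeneous partition of $p$ is a partition of its set of positions into homogeneous subdomains; it is regional if distinct subdomains have distinct labels; $p$ is regional if it admits a regional homogeneous partition; a language is regional if all its pictures are regional. Adjacency relations: for a tile $t$ define $\mathcal H_t,\mathcal V_t\subseteq(\Sigma\cup\{\#\})^2$ by: for $i=1,2$, $t(i,1)\,\mathcal H_t\,t(i,2)$ iff $t(i,1)\ne t(i,2)$; for $j=1,2$, $t(1,j)\,\mathcal V_t\,t(2,j)$ iff $t(1,j)\neq t(2,j)$. Let $\mathcal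 A_t=\mathcal H_t\cup\mathcal V_t$, $\mathcal A'_t=\mathcal H_t^{-1}\cup\mathcal V_t$, and for a tile set $\theta$ let $\mathcal A_\theta=\bigcup_{t\in\theta}\mathcal A_t$, $\mathcal A'_\theta=\bigcup_{t\in\theta}\mathcal A'_t$. A tile set $\theta$ is simple regional if both directed graphs on vertex set $\Sigma$ with edge relations $\mathcal A_\theta\cap\Sigma^2$ and $\mathcal A'_\theta\cap\Sigma^2$ are acyclic. *)

(* Defs.v *)
From mathcomp Require Import all_boot.
Set Implicit Arguments. Unset Strict Implicit. Unset Printing Implicit Defensive.

Section Pictures.
Variable Sigma : finType.

Record picture := Picture {
  prows : nat;
  pcols : nat;
  ppix : 'I_prows -> 'I_pcols -> Sigma;
  prows_pos : 0 < prows;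
  pcols_pos : 0 < pcols }.

(* Symbols of Sigma u {#}: None plays the role of #. *)
Definition symb := option Sigma.

Definition tile : finType := (symb * symb * symb * symb)%type.
Definition t11 (t : tile) : symb := t.1.1.1.
Definition t12 (t : tile) : symb := t.1.1.2.
Definition t21 (t : tile) : symb := t.1.2.
Definition t22 (t : tile) : symb := t.2.

(* pixel of p at 0-based (i,j), None outside *)
Definition pixn (p : picture) (i j : nat) : symb :=
  match @insub _ (fun k => k < prows p) 'I_(prows p) i,
        @insub _ (fun k => k < pcols p) 'I_(pcols p) j with
  | Some i', Some j' => Some (ppix i' j')
  | _, _ => None
  end.

(* framed picture \hat p, 0-based indices 0..m+1, 0..n+1 *)
Definition hat (p : picture) (i j : nat) : symb :=
  if (0 < i) && (0 < j) then pixn p i.-1 j.-1 else None.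

Definition tile_at (p : picture) (i j : nat) : tile :=
  (hat p i j, hat p i j.+1, hat p i.+1 j, hat p i.+1 j.+1).

Definition tiles_of (p : picture) (t : tile) : Prop :=
  exists i j, i <= prows p /\ j <= pcols p /\ tile_at p i j = t.

Definition LOC (theta : {set tile}) (p : picture) : Prop :=
  forall t, tiles_of p t -> t \in theta.

Definition language := picture -> Prop.

Definition local (L : language) : Prop :=
  exists theta : {set tile}, forall p, L p <-> LOC theta p.

Definition subdomain (m n : nat) (B : {set 'I_m * 'I_n}) : Prop :=
  exists x x' y y' : nat, x <= x' /\ y <= y' /\
    B = [set ij : 'I_m * 'I_n | (x <= ij.1 <= x') && (y <= ij.2 <= y')].

Definition homogeneous (p : picture) (B : {set 'I_(prows p) * 'I_(pcols p)})
  (C : Sigma) : Prop :=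
  forall ij, ij \in B -> ppix ij.1 ij.2 = C.

Definition regional_partition (p : picture)
  (P : {set {set 'I_(prows p) * 'I_(pcols p)}}) : Prop :=
  partition P [set: 'I_(prows p) * 'I_(pcols p)] /\
  (forall B, B \in P -> subdomain B) /\
  exists lab : {set 'I_(prows p) * 'I_(pcols p)} -> Sigma,
    (forall B, B \in P -> homogeneous B (lab B)) /\
    (forall B1 B2, B1 \in P -> B2 \in P -> B1 != B2 -> lab B1 != lab B2).

Definition regional_pic (p : picture) : Prop :=
  exists P, @regional_partition p P.

Definition regional (L : language) : Prop :=
  forall p, L p -> regional_pic p.

Definition Hrel (t : tile) (a b : symb) : bool :=
  ((a == t11 t) && (b == t12 t) && (t11 t != t12 t)) ||
  ((a == t21 t) && (b == t22 t) && (t21 t != t22 t)).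
Definition Vrel (t : tile) (a b : symb) : bool :=
  ((a == t11 t) && (b == t21 t) && (t11 t != t21 t)) ||
  ((a == t12 t) && (b == t22 t) && (t12 t != t22 t)).
Definition Arel (t : tile) (a b : symb) : bool := Hrel t a b || Vrel t a b.
Definition A'rel (t : tile) (a b : symb) : bool := Hrel t b a || Vrel t a b.

Definition Agraph (theta : {set tile}) : rel Sigma :=
  fun x y => [exists t in theta, Arel t (Some x) (Some y)].
Definition A'graph (theta : {set tile}) : rel Sigma :=
  fun x y => [exists t in theta, A'rel t (Some x) (Some y)].

Definition acyclic (e : rel Sigma) : Prop :=
  forall (x : Sigma) (s : seq Sigma), ~~ path e x (rcons s x).

Definition simple_regional (theta : {set tile}) : Prop :=
  acyclic (Agraph theta) /\ acyclic (A'graph theta).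

End Pictures.

(* Main.v *)
Require Import Defs.
From mathcomp Require Import all_boot.
From Stdlib Require Import ClassicalEpsilon.
Set Implicit Arguments. Unset Strict Implicit. Unset Printing Implicit Defensive.

Definition betw (x y z : nat) := (x <= z <= y) || (y <= z <= x).

Lemma betw_l x y : betw x y x.
Proof. by rewrite /betw leqnn /=; case: (leqP x y) => H //=; rewrite ltnW. Qed.
Lemma betw_r x y : betw x y y.
Proof. by rewrite /betw leqnn andbT /=; case: (leqP x y) => H //=; rewrite ltnW ?orbT. Qed.

Lemma predle a k : a <= k.+1 -> a.-1 <= k.
Proof. by case: a. Qed.

Lemma down_nat (Q : nat -> bool) : (forall k, Q k.+1 -> Q k) ->
  forall k k', Q k -> k' <= k -> Q k'.
Proof.
move=> HQ; elim=> [|k IH] k' Qk; first by rewrite leqn0 => /eqP->.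
rewrite leq_eqVlt => /orP[/eqP->//|]; rewrite ltnS; apply: IH; exact: HQ.
Qed.

Lemma maxlem (P : pred nat) B j : P j -> (forall l, P l -> l < B) ->
  exists w, j <= w /\ P w /\ ~~ P w.+1.
Proof.
move=> Pj HB; move: {2}(B - j) (leqnn (B - j)) => k.
elim: k j Pj => [|k IH] j Pj Hk.
  by have := HB _ Pj; rewrite -subn_gt0; move: Hk; case: (B - j).
case Pj1: (P j.+1); last by exists j; rewrite leqnn Pj1.
have [|w [H1 [H2 H3]]] := IH j.+1 Pj1; first by rewrite subnS; apply: predle.
by exists w; split => //; apply: ltnW.
Qed.

Section Core.
Variable Sigma : finType.
Variable g : nat -> nat -> option Sigma.
Variables m N : nat.
Hypothesis Hsupp : forall i j, (g i j != None) = (i < m) && (j < N).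
Hypothesis Hconv : forall i j i' j' k l c, g i j = Some c -> g i' j' = Some c ->
  i <= k <= i' -> betw j j' l -> g k l = Some c.

Lemma gsome i j : i < m -> j < N -> exists c, g i j = Some c.
Proof. move=> Hi Hj; have := Hsupp i j; rewrite Hi Hj; case: (g i j) => // c _; by exists c. Qed.
Lemma gin i j c : g i j = Some c -> i < m /\ j < N.
Proof. by move=> H; have := Hsupp i j; rewrite H /= => /esym/andP. Qed.

Variable e : rel Sigma.
Hypothesis He1 : forall a b, e a b -> exists i j, a != b /\ g i j = Some a /\
  (g i j.+1 = Some b \/ g i.+1 j = Some b).
Hypothesis He2 : forall i j a b, g i j = Some a ->
  (g i j.+1 = Some b \/ g i.+1 j = Some b) -> a != b -> e a b.

Theorem core_acyclic : acyclic e.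
Proof.
move=> x s; apply/negP => Hp.
pose W a := connect e a x.
have Hx : exists y, e x y /\ W y.
  case: s Hp => [|y s] /= Hp.
    by exists x; split; [move: Hp => /andP[]| exact: connect0].
  move/andP: Hp => [Exy Hp]; exists y; split => //; apply/connectP.
  by exists (rcons s x) => //; rewrite last_rcons.
have F1 : forall a, W a -> exists b, e a b /\ W b.
  move=> a Wa; case: (altP (a =P x)) => [->|ax]; first exact Hx.
  case/connectP: Wa => [[|b q]] /= Hq Hl; first by rewrite Hl eqxx in ax.
  move/andP: Hq => [Eab Hq]; exists b; split=> //; apply/connectP; by exists q.
pose U i j := if g i j is Some c then W c else false.
have F2r : forall i j, U i j.+1 -> U i j.
  move=> i j; rewrite /U; case E1: (g i j.+1) => [c|] // Wc.
  have [Hi Hj] := gin E1; have [d Ed] := gsome Hi (ltnW Hj); rewrite Ed.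
  case: (altP (d =P c)) => [->//|dc].
  by apply: connect_trans (connect1 _) Wc; exact: He2 Ed (or_introl E1) dc.
have F2d : forall i j, U i.+1 j -> U i j.
  move=> i j; rewrite /U; case E1: (g i.+1 j) => [c|] // Wc.
  have [Hi Hj] := gin E1; have [d Ed] := gsome (ltnW Hi) Hj; rewrite Ed.
  case: (altP (d =P c)) => [->//|dc].
  by apply: connect_trans (connect1 _) Wc; exact: He2 Ed (or_intror E1) dc.
have F2 : forall i j i' j', U i j -> i' <= i -> j' <= j -> U i' j'.
  move=> i j i' j' H Hi Hj.
  have H1 : U i j' by apply: (down_nat (Q := U i)) H Hj => k; apply: F2r.
  by apply: (down_nat (Q := fun k => U k j')) H1 Hi => k; apply: F2d.
have Main : forall k i w, m - i <= k -> U i w -> ~~ U i w.+1 ->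
    (i == 0) || (g i.-1 w != g i w) -> False.
  elim=> [|k IH] i w Hk Uiw Nw Htop.
    move: Uiw; rewrite /U; case E: (g i w) => [c|] // _; have [Hi _] := gin E.
    by move: Hk; rewrite leqn0 subn_eq0 leqNgt Hi.
  move: Uiw; rewrite /U; case E: (g i w) => [c|] // Wc.
  have Htr : forall i'' j'', g i'' j'' = Some c -> i <= i''.
    move=> i'' j'' E2; rewrite leqNgt; apply/negP => Hlt.
    have i0 : i != 0 by rewrite -lt0n (leq_ltn_trans _ Hlt).
    have Ec : g i.-1 w = Some c.
      apply: (Hconv E2 E); last exact: betw_r.
      by rewrite -ltnS prednK ?lt0n // Hlt leq_pred.
    by move: Htop; rewrite (negbTE i0) Ec E eqxx.
  have [d [Ecd Wd]] := F1 _ Wc.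
  have [i' [j' [cd [E' Hd]]]] := He1 Ecd.
  have ii' := Htr _ _ E'.
  case: Hd => Ed.
  + have U1 : U i' j'.+1 by rewrite /U Ed.
    have U2 : U i j'.+1 := F2 _ _ _ _ U1 ii' (leqnn _).
    have jw : j'.+1 <= w.
      rewrite leqNgt; apply/negP=> H; apply: (negP Nw); exact: F2 U2 (leqnn _) H.
    have : g i' j'.+1 = Some c.
      apply: (Hconv E E'); first by rewrite ii' leqnn.
      by rewrite /betw jw leqnSn orbT.
    by rewrite Ed => -[] dc; rewrite dc eqxx in cd.
  + have U1 : U i'.+1 j' by rewrite /U Ed.
    have [w'' [jw'' [Uw'' Nw'']]] := maxlem U1 (B := N)
      (fun l => ltac:(rewrite /U; case E3: g => [c3|] // _; by have [_ ] := gin E3)).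
    have w''w : w'' <= w.
      rewrite leqNgt; apply/negP=> H; apply: (negP Nw).
      by apply: F2 Uw'' _ H; apply: (leq_trans ii').
    have Ec : g i' w'' = Some c.
      apply: (Hconv E E'); first by rewrite ii' leqnn.
      by rewrite /betw jw'' w''w orbT.
    apply: (IH i'.+1 w'') => //.
      rewrite subnS; apply: predle; apply: leq_trans Hk; exact: leq_sub2l.
    rewrite /= Ec; apply/eqP => Heq.
    have : g i'.+1 j' = Some c.
      apply: (Hconv E' (esym Heq)); first by rewrite leqnSn leqnn.
      exact: betw_l.
    by rewrite Ed => -[] dc; rewrite dc eqxx in cd.
have [y [Exy _]] := Hx.
have [i0 [j0 [_ [E0 _]]]] := He1 Exy.
have U00 : U 0 0 by apply: (F2 i0 j0) => //; rewrite /U E0; exact: connect0.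
have [w [_ [Uw Nw]]] := maxlem U00 (B := N)
  (fun l => ltac:(rewrite /U; case E3: g => [c3|] // _; by have [_ ] := gin E3)).
by apply: (Main m 0 w) => //; rewrite subn0.
Qed.
End Core.
Lemma no_2cycle (Sigma : finType) (f : rel Sigma) : acyclic f ->
  forall a b, connect f a b -> connect f b a -> a = b.
Proof.
move=> Hf a b /connectP[p Hp Hl] /connectP[q Hq Hl2]; apply/eqP/negPn/negP => ab.
case: p Hp Hl => [|y p] Hp Hl; first by rewrite Hl eqxx in ab.
have Hc : path f a ((y :: p) ++ q) by rewrite cat_path Hp -Hl Hq.
have Hla : last y (p ++ q) = a by rewrite last_cat -[last y p]Hl -Hl2.
have E : rcons (belast y (p ++ q)) a = y :: p ++ q by rewrite -Hla -lastI.
by have := Hf a (belast y (p ++ q)); rewrite E Hc.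
Qed.

Section Conv.
Variable Sigma : finType.
Variable g : nat -> nat -> option Sigma.
Variables m N : nat.
Hypothesis Hsupp : forall i j, (g i j != None) = (i < m) && (j < N).
Variables e e' : rel Sigma.
Hypothesis Ha : acyclic e.
Hypothesis Ha' : acyclic e'.
Hypothesis Er : forall i j a b, g i j = Some a -> g i j.+1 = Some b -> a != b -> e a b.
Hypothesis Ed : forall i j a b, g i j = Some a -> g i.+1 j = Some b -> a != b -> e a b.
Hypothesis E'l : forall i j a b, g i j = Some a -> g i j.+1 = Some b -> a != b -> e' b a.
Hypothesis E'd : forall i j a b, g i j = Some a -> g i.+1 j = Some b -> a != b -> e' a b.

Let gsome := gsome Hsupp.
Let gin := gin Hsupp.

Lemma step (f : rel Sigma) a b : (a != b -> f a b) -> connect f a b.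
Proof. by case: (altP (a =P b)) => [->|ab] H; [exact: connect0| apply: connect1; exact: H]. Qed.

Lemma conn_row i j l a b : g i j = Some a -> j <= l -> g i l = Some b -> connect e a b.
Proof.
move=> Hga; elim: l b => [|l IH] b Hjl Hb.
  by move: Hjl; rewrite leqn0 => /eqP Hj; move: Hga; rewrite Hj Hb => -[->]; exact: connect0.
move: Hjl; rewrite leq_eqVlt => /orP[/eqP Hj|Hjl].
  by move: Hga; rewrite Hj Hb => -[->]; exact: connect0.
have [Hi Hl] := gin Hb; have [b' Hb'] := gsome Hi (ltnW Hl).
apply: connect_trans (IH _ Hjl Hb') _; apply: step; exact: Er Hb' Hb.
Qed.

Lemma conn_dr i j k l a b : g i j = Some a -> i <= k -> j <= l -> g k l = Some b ->
  connect e a b.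
Proof.
move=> Hga; elim: k b => [|k IH] b Hik Hjl Hb.
  by move: Hga; move: Hik; rewrite leqn0 => /eqP->; move=> Hga; exact: conn_row Hga Hjl Hb.
move: Hik; rewrite leq_eqVlt => /orP[/eqP Hi|Hik].
  by move: Hga; rewrite Hi => Hga; exact: conn_row Hga Hjl Hb.
have [Hk Hl] := gin Hb; have [b' Hb'] := gsome (ltnW Hk) Hl.
apply: connect_trans (IH _ Hik Hjl Hb') _; apply: step; exact: Ed Hb' Hb.
Qed.

Lemma conn_rowl i j l a b : g i j = Some a -> l <= j -> g i l = Some b -> connect e' a b.
Proof.
elim: j a => [|j IH] a Hga Hlj Hb.
  by move: Hb; move: Hlj; rewrite leqn0 => /eqP->; rewrite Hga => -[->]; exact: connect0.
move: Hlj; rewrite leq_eqVlt => /orP[/eqP Hj|Hlj].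
  by move: Hga; rewrite -Hj Hb => -[->]; exact: connect0.
have [Hi Hl] := gin Hga; have [a' Hga'] := gsome Hi (ltnW Hl).
apply: connect_trans _ (IH _ Hga' Hlj Hb); apply: step => H.
by apply: E'l Hga' Hga _; rewrite eq_sym.
Qed.

Lemma conn_dl i j k l a b : g i j = Some a -> i <= k -> l <= j -> g k l = Some b ->
  connect e' a b.
Proof.
move=> Hga; elim: k b => [|k IH] b Hik Hjl Hb.
  by move: Hga; move: Hik; rewrite leqn0 => /eqP->; move=> Hga; exact: conn_rowl Hga Hjl Hb.
move: Hik; rewrite leq_eqVlt => /orP[/eqP Hi|Hik].
  by move: Hga; rewrite Hi => Hga; exact: conn_rowl Hga Hjl Hb.
have [Hk Hl] := gin Hb; have [b' Hb'] := gsome (ltnW Hk) Hl.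
apply: connect_trans (IH _ Hik Hjl Hb') _; apply: step; exact: E'd Hb' Hb.
Qed.

Lemma conv_of_acyclic i j i' j' k l c : g i j = Some c -> g i' j' = Some c ->
  i <= k <= i' -> betw j j' l -> g k l = Some c.
Proof.
move=> H1 H2 /andP[ik ki] Hb.
have [Hi' Hj'] := gin H2; have [Hi Hj] := gin H1.
have Hk : k < m by apply: leq_ltn_trans Hi'.
case/orP: Hb => /andP[jl lj].
  have [d Hd] := gsome Hk (leq_ltn_trans lj Hj').
  rewrite Hd; congr Some; apply: (no_2cycle Ha).
    exact: conn_dr Hd ki lj H2.
  exact: conn_dr H1 ik jl Hd.
have [d Hd] := gsome Hk (leq_ltn_trans lj Hj).
rewrite Hd; congr Some; apply: (no_2cycle Ha').
  exact: conn_dl Hd ki jl H2.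
exact: conn_dl H1 ik lj Hd.
Qed.
End Conv.
Section Pic.
Variable Sigma : finType.
Implicit Type p : picture Sigma.
Lemma pixn_in p i j (Hi : i < prows p) (Hj : j < pcols p) :
  pixn p i j = Some (ppix (Ordinal Hi) (Ordinal Hj)).
Proof.
rewrite /pixn; case: insubP => [i' _ Ei|]; last by rewrite Hi.
case: insubP => [j' _ Ej|]; last by rewrite Hj.
by congr (Some (ppix _ _)); apply: val_inj.
Qed.
Lemma pixn_supp p i j : (pixn p i j != None) = (i < prows p) && (j < pcols p).
Proof.
rewrite /pixn; case: insubP => [i' Hi _|Hi] /=; last by rewrite (negbTE Hi).
by case: insubP => [j' Hj _|Hj] /=; rewrite Hi ?Hj ?(negbTE Hj).
Qed.

Lemma pixn_ord p (x : 'I_(prows p)) (y : 'I_(pcols p)) : pixn p x y = Some (ppix x y).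
Proof. by rewrite (pixn_in (ltn_ord x) (ltn_ord y)); congr (Some (ppix _ _)); apply: val_inj. Qed.

Lemma pixnE p i j c : pixn p i j = Some c ->
  exists (x : 'I_(prows p)) (y : 'I_(pcols p)), val x = i /\ val y = j /\ ppix x y = c.
Proof.
move=> H; have := pixn_supp p i j; rewrite H => /esym/andP[Hi Hj].
exists (Ordinal Hi), (Ordinal Hj); split=> //; split=> //.
by move: H; rewrite (pixn_in Hi Hj) => -[].
Qed.

Definition tileset p : {set tile Sigma} :=
  [set t | [exists i : 'I_(prows p).+1, exists j : 'I_(pcols p).+1, tile_at p i j == t]].

Lemma tilesetP p t : reflect (tiles_of p t) (t \in tileset p).
Proof.
rewrite inE; apply: (iffP existsP).
  case=> i /existsP[j /eqP Ht]; exists i, j; split; first by rewrite -ltnS ltn_ord.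
  split; first by rewrite -ltnS ltn_ord.
  exact Ht.
case=> i [j [Hi [Hj Ht]]].
have Hi' : i < (prows p).+1 by [].
have Hj' : j < (pcols p).+1 by [].
exists (Ordinal Hi'); apply/existsP; exists (Ordinal Hj'); apply/eqP; exact Ht.
Qed.


Lemma tile_in p i j : i <= prows p -> j <= pcols p -> tile_at p i j \in tileset p.
Proof. by move=> Hi Hj; apply/tilesetP; exists i, j. Qed.

Lemma hat0l p j : hat p 0 j = None. Proof. by []. Qed.
Lemma hat0r p i : hat p i 0 = None. Proof. by rewrite /hat andbF. Qed.
Lemma hatS p i j : hat p i.+1 j.+1 = pixn p i j. Proof. by []. Qed.

Lemma Arel_cases (x11 x12 x21 x22 : symb Sigma) a b :
  Arel (x11, x12, x21, x22) (Some a) (Some b) -> a != b /\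
  ((x11 = Some a /\ x12 = Some b) \/ (x21 = Some a /\ x22 = Some b) \/
   (x11 = Some a /\ x21 = Some b) \/ (x12 = Some a /\ x22 = Some b)).
Proof.
rewrite /Arel /Hrel /Vrel /t11 /t12 /t21 /t22 /=.
move=> /orP[/orP[]|/orP[]] /andP[/andP[/eqP E1 /eqP E2] H];
  (split; [by apply: contraNneq H => ab; rewrite -E1 -E2 ab | ]);
  [left | right; left | right; right; left | right; right; right];
  split; symmetry; [exact E1 | exact E2|exact E1 | exact E2|exact E1 | exact E2|exact E1 | exact E2].
Qed.

Lemma A'rel_cases (x11 x12 x21 x22 : symb Sigma) a b :
  A'rel (x11, x12, x21, x22) (Some a) (Some b) -> a != b /\
  ((x11 = Some b /\ x12 = Some a) \/ (x21 = Some b /\ x22 = Some a) \/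
   (x11 = Some a /\ x21 = Some b) \/ (x12 = Some a /\ x22 = Some b)).
Proof.
rewrite /A'rel /Hrel /Vrel /t11 /t12 /t21 /t22 /=.
move=> /orP[/orP[]|/orP[]] /andP[/andP[/eqP E1 /eqP E2] H];
  (split; [by apply: contraNneq H => ab; rewrite -E1 -E2 ab | ]);
  [left | right; left | right; right; left | right; right; right];
  split; symmetry; [exact E1 | exact E2|exact E1 | exact E2|exact E1 | exact E2|exact E1 | exact E2].
Qed.

Lemma Agraph_cells p a b : Agraph (tileset p) a b -> exists i j, a != b /\
  pixn p i j = Some a /\ (pixn p i j.+1 = Some b \/ pixn p i.+1 j = Some b).
Proof.
case/existsP=> t /andP[/tilesetP[i [j [_ [_ <-]]]]]; rewrite /tile_at.
case: i => [|i]; case: j => [|j]; rewrite ?hat0l ?hat0r ?hatS => /Arel_cases [ab H];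
  case: H => [[H1 H2]|[[H1 H2]|[[H1 H2]|[H1 H2]]]];
  first [discriminate | by eexists _, _; split; [exact ab|split; [exact H1|first [left; exact H2 | right; exact H2]]]].
Qed.

Lemma A'graph_cells p a b : A'graph (tileset p) a b -> exists i j, a != b /\
  ((pixn p i j = Some b /\ pixn p i j.+1 = Some a) \/ (pixn p i j = Some a /\ pixn p i.+1 j = Some b)).
Proof.
case/existsP=> t /andP[/tilesetP[i [j [_ [_ <-]]]]]; rewrite /tile_at.
case: i => [|i]; case: j => [|j]; rewrite ?hat0l ?hat0r ?hatS => /A'rel_cases [ab H];
  case: H => [[H1 H2]|[[H1 H2]|[[H1 H2]|[H1 H2]]]];
  first [discriminate | by eexists _, _; split; [exact ab|first [left; split; [exact H1|exact H2] | right; split; [exact H1|exact H2]]]].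
Qed.

Lemma in_range p i j c : pixn p i j = Some c -> i < prows p /\ j < pcols p.
Proof. by move=> H; have := pixn_supp p i j; rewrite H => /esym/andP. Qed.

Lemma Agraph_r p i j a b : pixn p i j = Some a -> pixn p i j.+1 = Some b -> a != b ->
  Agraph (tileset p) a b.
Proof.
move=> H1 H2 ab; apply/existsP; exists (tile_at p i.+1 j.+1).
have [Hi Hj] := in_range H1.
rewrite tile_in //; apply/orP; left; apply/orP; left.
rewrite /t11 /t12 /tile_at /= !hatS H1 H2 !eqxx /=; exact ab.
Qed.

Lemma Agraph_d p i j a b : pixn p i j = Some a -> pixn p i.+1 j = Some b -> a != b ->
  Agraph (tileset p) a b.
Proof.
move=> H1 H2 ab; apply/existsP; exists (tile_at p i.+1 j.+1).
have [Hi Hj] := in_range H1.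
rewrite tile_in //; apply/orP; right; apply/orP; left.
rewrite /t11 /t21 /tile_at /= !hatS H1 H2 !eqxx /=; exact ab.
Qed.

Lemma A'graph_l p i j a b : pixn p i j = Some a -> pixn p i j.+1 = Some b -> a != b ->
  A'graph (tileset p) b a.
Proof.
move=> H1 H2 ab; apply/existsP; exists (tile_at p i.+1 j.+1).
have [Hi Hj] := in_range H1.
rewrite tile_in //; apply/orP; left; apply/orP; left.
rewrite /t11 /t12 /tile_at /= !hatS H1 H2 !eqxx /=; exact ab.
Qed.

Lemma A'graph_d p i j a b : pixn p i j = Some a -> pixn p i.+1 j = Some b -> a != b ->
  A'graph (tileset p) a b.
Proof.
move=> H1 H2 ab; apply/existsP; exists (tile_at p i.+1 j.+1).
have [Hi Hj] := in_range H1.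
rewrite tile_in //; apply/orP; right; apply/orP; left.
rewrite /t11 /t21 /tile_at /= !hatS H1 H2 !eqxx /=; exact ab.
Qed.

Lemma Agraph_sub (T T' : {set tile Sigma}) a b : T \subset T' -> Agraph T a b -> Agraph T' a b.
Proof. by move=> /subsetP HT /existsP[t /andP[Ht H]]; apply/existsP; exists t; rewrite HT. Qed.
Lemma A'graph_sub (T T' : {set tile Sigma}) a b : T \subset T' -> A'graph T a b -> A'graph T' a b.
Proof. by move=> /subsetP HT /existsP[t /andP[Ht H]]; apply/existsP; exists t; rewrite HT. Qed.

Definition conv_pic p := forall i j i' j' k l c, pixn p i j = Some c -> pixn p i' j' = Some c ->
  i <= k <= i' -> betw j j' l -> pixn p k l = Some c.

Lemma conv_of_regional p : regional_pic p -> conv_pic p.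
Proof.
case=> P [Hpart [Hsub [lab [Hhom Hdist]]]] i j i' j' k l c H1 H2 /andP[ik ki] Hb.
have [x [y [Ex [Ey Hxy]]]] := pixnE H1.
have [x' [y' [Ex' [Ey' Hxy']]]] := pixnE H2.
subst i j i' j'.
have Hcov := cover_partition Hpart.
have inP : forall z : 'I_(prows p) * 'I_(pcols p), exists2 B, B \in P & z \in B.
  move=> z; have : z \in cover P by rewrite Hcov inE.
  by case/bigcupP=> B HB Hz; exists B.
have [B1 HB1 Hz1] := inP (x, y).
have [B2 HB2 Hz2] := inP (x', y').
have L1 : lab B1 = c by rewrite -(Hhom _ HB1 _ Hz1).
have L2 : lab B2 = c by rewrite -(Hhom _ HB2 _ Hz2).
have EB : B1 = B2.
  apply/eqP; apply/negPn/negP => Hne; have := Hdist _ _ HB1 HB2 Hne; by rewrite L1 L2 eqxx.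
subst B2.
have [x0 [x0' [y0 [y0' [_ [_ EB1]]]]]] := Hsub _ HB1.
move: Hz1 Hz2; rewrite EB1 !inE /= => /andP[/andP[a1 a2] /andP[a3 a4]] /andP[/andP[b1 b2] /andP[b3 b4]].
have Hk : k < prows p by apply: leq_ltn_trans ki (ltn_ord _).
have Hl : l < pcols p.
  by case/orP: Hb => /andP[_ H]; apply: leq_ltn_trans H (ltn_ord _).
rewrite (pixn_in Hk Hl); congr Some; rewrite -L1; apply: (Hhom _ HB1 (Ordinal Hk, Ordinal Hl)).
rewrite EB1 inE /= (leq_trans a1 ik) (leq_trans ki b2) /=.
case/orP: Hb => /andP[c1 c2]; apply/andP; split.
- exact: leq_trans a3 c1.
- exact: leq_trans c2 b4.
- exact: leq_trans b3 c1.
- exact: leq_trans c2 a4.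
Qed.

Lemma betw_sym x y z : betw x y z = betw y x z.
Proof. by rewrite /betw orbC. Qed.

Lemma conv2 p : conv_pic p -> forall i j i' j' k l c, pixn p i j = Some c ->
  pixn p i' j' = Some c -> betw i i' k -> betw j j' l -> pixn p k l = Some c.
Proof.
move=> H i j i' j' k l c H1 H2 /orP[] Hk Hl; first exact: H H1 H2 Hk Hl.
by apply: H H2 H1 Hk _; rewrite betw_sym.
Qed.

Lemma regional_of_conv p : conv_pic p -> regional_pic p.
Proof.
move=> Hc.
pose f := fun ij : 'I_(prows p) * 'I_(pcols p) => ppix ij.1 ij.2.
pose x00 := (Ordinal (prows_pos p), Ordinal (pcols_pos p)).
pose lab := fun B : {set 'I_(prows p) * 'I_(pcols p)} =>
  if [pick y in B] is Some y then f y else f x00.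
exists (preim_partition f setT); split; first exact: preim_partitionP.
have HP : forall B, B \in preim_partition f setT -> exists x, B = [set y in setT | f x == f y].
  by move=> B /imsetP[x _ ->]; exists x.
have Hhom : forall B, B \in preim_partition f setT -> forall y, y \in B -> f y = lab B.
  move=> B /HP[x ->] y Hy; rewrite /lab; case: pickP => [z Hz|H]; last by rewrite H in Hy.
  by move: Hy Hz; rewrite !inE /= => /eqP <- /eqP.
split.
  move=> B HB; have [x EB] := HP _ HB.
  have Bx : x \in B by rewrite EB !inE eqxx.
  case: (arg_minnP (fun z : 'I_(prows p) * 'I_(pcols p) => val z.1) Bx) => A HA minA.
  case: (arg_maxnP (fun z : 'I_(prows p) * 'I_(pcols p) => val z.1) Bx) => Bm HBm maxB.
  case: (arg_minnP (fun z : 'I_(prows p) * 'I_(pcols p) => val z.2) Bx) => C HC minC.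
  case: (arg_maxnP (fun z : 'I_(prows p) * 'I_(pcols p) => val z.2) Bx) => D HD maxD.
  have {}maxB : forall w, w \in B -> val w.1 <= val Bm.1 := maxB.
  have {}maxD : forall w, w \in B -> val w.2 <= val D.2 := maxD.
  exists A.1, Bm.1, C.2, D.2; split; first exact: leq_trans (minA _ Bx) (maxB _ Bx).
  split; first exact: leq_trans (minC _ Bx) (maxD _ Bx).
  apply/setP => z; rewrite inE; apply/idP/idP.
    by move=> Hz; rewrite minA // maxB // minC // maxD.
  move=> /andP[/andP[z1 z2] /andP[z3 z4]].
  have fc : forall w, w \in B -> pixn p w.1 w.2 = Some (f x).
    by move=> w; rewrite EB !inE => /eqP ->; exact: pixn_ord.
  have E1 : pixn p z.1 A.2 = Some (f x).
    by apply: (conv2 Hc (fc _ HA) (fc _ HBm)); [rewrite /betw z1 z2 | exact: betw_l].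
  have E2 : pixn p z.1 C.2 = Some (f x).
    by apply: (conv2 Hc (fc _ HC) E1); [exact: betw_r | exact: betw_l].
  have E3 : pixn p z.1 D.2 = Some (f x).
    by apply: (conv2 Hc (fc _ HD) E1); [exact: betw_r | exact: betw_l].
  have E4 : pixn p z.1 z.2 = Some (f x).
    by apply: (conv2 Hc E2 E3); [exact: betw_l | rewrite /betw z3 z4].
  rewrite EB !inE; move: E4; rewrite pixn_ord => -[Ez].
  by apply/eqP; rewrite -Ez.
exists lab; split.
  by move=> B HB y Hy; exact: Hhom.
move=> B1 B2 HB1 HB2 Hne; apply: contraNneq Hne => El.
have [x1 E1] := HP _ HB1; have [x2 E2] := HP _ HB2.
have fx1 : f x1 = lab B1 by apply: Hhom HB1 _ _; rewrite E1 !inE eqxx.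
have fx2 : f x2 = lab B2 by apply: Hhom HB2 _ _; rewrite E2 !inE eqxx.
by apply/eqP; rewrite E1 E2; apply/setP => y; rewrite !inE fx1 fx2 El.
Qed.

Definition gm p i j := if j < pcols p then pixn p i ((pcols p).-1 - j) else None.

Lemma le_pred j N : j < N -> j <= N.-1.
Proof. by move=> H; rewrite -ltnS prednK // (leq_ltn_trans (leq0n j) H). Qed.

Lemma sub_lt j N : j < N -> N.-1 - j < N.
Proof. by move=> H; apply: leq_ltn_trans (leq_subr j _) _; rewrite ltn_predL (leq_ltn_trans (leq0n j) H). Qed.

Lemma gm_eq p i j : j < pcols p -> gm p i ((pcols p).-1 - j) = pixn p i j.
Proof. by move=> H; rewrite /gm sub_lt // subKn // le_pred. Qed.

Lemma gm_supp p i j : (gm p i j != None) = (i < prows p) && (j < pcols p).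
Proof.
rewrite /gm; case: ltnP => Hj; last by rewrite andbF.
by rewrite pixn_supp sub_lt ?andbT.
Qed.

Lemma gm_conv p : conv_pic p -> forall i j i' j' k l c, gm p i j = Some c -> gm p i' j' = Some c ->
  i <= k <= i' -> betw j j' l -> gm p k l = Some c.
Proof.
move=> Hc i j i' j' k l c; rewrite /gm.
case Hj: (j < pcols p) => //; case Hj': (j' < pcols p) => // H1 H2 Hik Hb.
have Hl : l < pcols p.
  by case/orP: Hb => /andP[_ H]; apply: leq_ltn_trans H _; rewrite ?Hj ?Hj'.
rewrite Hl; apply: Hc H1 H2 Hik _.
case/orP: Hb => /andP[a b]; apply/orP; [right|left];
  by rewrite (leq_sub2l _ a) (leq_sub2l _ b).
Qed.

Lemma gm_e1 p a b : A'graph (tileset p) a b -> exists i j, a != b /\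
  gm p i j = Some a /\ (gm p i j.+1 = Some b \/ gm p i.+1 j = Some b).
Proof.
move=> /A'graph_cells[i [j [ab [[H1 H2]|[H1 H2]]]]].
  have [_ Hj1] := in_range H2.
  exists i, ((pcols p).-1 - j.+1); split; first exact ab.
  rewrite gm_eq // H2; split => //; left.
  by rewrite subnSK ?gm_eq ?(ltnW Hj1) // -ltnS prednK // (leq_ltn_trans (leq0n j) (ltnW Hj1)).
have [_ Hj] := in_range H1.
exists i, ((pcols p).-1 - j); split; first exact ab.
by rewrite !gm_eq // H1 H2; split => //; right.
Qed.

Lemma gm_e2 p i j a b : gm p i j = Some a -> (gm p i j.+1 = Some b \/ gm p i.+1 j = Some b) ->
  a != b -> A'graph (tileset p) a b.
Proof.
rewrite /gm; case Hj: (j < pcols p) => // H1 [|].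
  case Hj1: (j.+1 < pcols p) => // H2 ab.
  apply: (A'graph_l H2); last by rewrite eq_sym.
  by rewrite subnSK // -ltnS prednK // (leq_ltn_trans (leq0n j) Hj).
move=> H2 ab; exact: A'graph_d H1 H2 ab.
Qed.

Lemma simple_of_regional p : regional_pic p -> simple_regional (tileset p).
Proof.
move=> Hr; have Hc := conv_of_regional Hr; split.
  apply: (core_acyclic (pixn_supp p) Hc); first exact: Agraph_cells.
  by move=> i j a b H1 [H2|H2] ab; [exact: Agraph_r H1 H2 ab | exact: Agraph_d H1 H2 ab].
apply: (core_acyclic (gm_supp p) (gm_conv Hc)); first exact: gm_e1.
exact: gm_e2.
Qed.

Lemma regional_of_simple p (th : {set tile Sigma}) : simple_regional th -> LOC th p -> regional_pic p.
Proof.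
move=> [HA HA'] Hloc.
have Hs : tileset p \subset th by apply/subsetP => t /tilesetP; exact: Hloc.
apply: regional_of_conv => i j i' j' k l c.
apply: (conv_of_acyclic (pixn_supp p) HA HA').
- by move=> i0 j0 a b H1 H2 ab; apply: Agraph_sub Hs _; exact: Agraph_r H1 H2 ab.
- by move=> i0 j0 a b H1 H2 ab; apply: Agraph_sub Hs _; exact: Agraph_d H1 H2 ab.
- by move=> i0 j0 a b H1 H2 ab; apply: A'graph_sub Hs _; exact: A'graph_l H1 H2 ab.
- by move=> i0 j0 a b H1 H2 ab; apply: A'graph_sub Hs _; exact: A'graph_d H1 H2 ab.
Qed.

Lemma simple_set0 : simple_regional (set0 : {set tile Sigma}).
Proof.
have H : forall (e : rel Sigma), (forall x y, ~~ e x y) -> acyclic e.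
  by move=> e He x [|y s] /=; rewrite (negbTE (He _ _)).
by split; apply: H => x y; apply/existsP => -[t]; rewrite inE.
Qed.
End Pic.

Theorem proposition4 (Sigma : finType) (L : language Sigma) :
  local L ->
  (regional L <->
   exists (n : nat) (theta : 'I_n -> {set tile Sigma}),
     1 <= n /\ (forall i, simple_regional (theta i)) /\
     (forall p, L p <-> exists i : 'I_n, LOC (theta i) p)).
Proof.
move=> [th Hth]; split.
- move=> Hreg.
  pose good (T : {set tile Sigma}) := simple_regional T /\ T \subset th.
  pose thf (i : 'I_#|{set tile Sigma}|) := let T := enum_val i in
    if excluded_middle_informative (good T) then T else set0.
  exists #|{set tile Sigma}|, thf; split; first by apply/card_gt0P; exists set0.
  split.
    move=> i; rewrite /thf /=.
    destruct (excluded_middle_informative (good (enum_val i))) as [Hg|Hg]; [exact: Hg.1 | exact: simple_set0].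
  move=> p; split.
    move=> Lp; have Hloc := (Hth p).1 Lp.
    have Hsub : tileset p \subset th by apply/subsetP => t /tilesetP; exact: Hloc.
    have Hg : good (tileset p) := conj (simple_of_regional (Hreg p Lp)) Hsub.
    exists (enum_rank (tileset p)); rewrite /thf /= enum_rankK.
    destruct (excluded_middle_informative (good (tileset p))) as [Hg'|Hg']; last by [].
    by move=> t /tilesetP.
  move=> [i]; rewrite /thf /=.
  destruct (excluded_middle_informative (good (enum_val i))) as [Hg|Hg] => Hl.
    have Hs := Hg.2.
    by apply/Hth => t Ht; exact: (subsetP Hs) (Hl t Ht).
  have : tile_at p 0 0 \in (set0 : {set tile Sigma}) by apply: Hl; exists 0, 0.
  by rewrite inE.
- move=> [n [thf [_ [Hs Hu]]]] p Lp.
  have [i Hi] := (Hu p).1 Lp.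
  exact: regional_of_simple (Hs i) Hi.
Qed.
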